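(* Consider the problem $\min_{x\in\mathbb R^n} f(x)$ subject to $Ax=b$, where $f:\mathbb R^n\to\mathbb R$ is convex and continuously differentiable, $A\in\mathbb R^{m\times n}$, $b\in\mathbb R^m$, and assume the KKT set $\Omega$ is nonempty. Let $\{(x_k,\lambda_k)\}_{k\ge0}$ be generated by the accelerated augmented Lagrangian method described in the context (in either Case I or Case II), and fix $(x^*,\lambda^* )\in\Omega$. Then: (i) $(\eta-\rho)\sum_{k=1}^{+\infty} t_{k+1}\big(\mathcal L_\beta(x_k,\lambda^* )-\mathcal L_\beta(x^*,\lambda^* )\big)<+\infty$ and $(1-\eta)\sum_{k=1}^{+\infty} t_{k+1}\|(x_{k+1},\lambda_{k+1})-(x_k,\lambda_k)\|_M^2<+\infty$. (ii) For all $k\ge1$, $\mathcal L_\beta(x_k,\lambda^* )-\mathcal L_\beta(x^*,\lambda^* )\le \mathcal E_1/t_k^2$, where $\mathcal E_1=\mathcal L_\beta(x_1,\lambda^* )-\mathcal L_\beta(x^*,\lambda^* )+\frac{\eta}{2\gamma}\|x_1-x^*\|^2+\frac{\eta}{2\delta}\|\lambda_1-\lambda^*\|^2$. (iii) The sequence $\{(x_k,\lambda_k)\}_{k\ge0}$ is bounded, and for all $k>1$, $\|(x_k,\lambda_k)-(x_{k-1},\lambda_{k-1})\|_M\le \frac{2\sqrt{2\mathcal E_1}}{t_k-1}$. (iv) There exists a constant $C>0$ such that for all $k\ge1$, $\|Ax_k-b\|\le C/t_k^2$ and $|f(x_k)-f(x^* )|\le \big(\mathcal E_1+\|\lambda^*\|C+\beta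 C^2/2\big)/t_k^2$.
   Context: The KKT set is $\Omega=\{(x^*,\lambda^* )\in\mathbb R^n\times\mathbb R^m: Ax^*=b,\ \nabla f(x^* )+A^\top\lambda^*=0\}$. For $\beta\ge0$, the augmented Lagrangian is $\mathcal L_\beta(x,\lambda)=f(x)+\langle\lambda,Ax-b\rangle+\frac\beta2\|Ax-b\|^2$. For $\gamma,\delta>0$ and $z=(x,\lambda)$, $\|z\|_M^2=\frac1\gamma\|x\|^2+\frac1\delta\|\lambda\|^2$ (i.e. $M=\mathrm{diag}(\gamma^{-1}I_n,\delta^{-1}I_m)$). Parameter sequence: $\{t_k\}_{k\ge1}$ is nondecreasing, $t_1=1$, $t_k>1$ for all $k>2$, $t_k\to+\infty$, and $t_{k+1}^2-t_k^2\le\rho t_{k+1}$ for all $k\ge 1$, with fixed $\rho\in(0,1]$. Fix $\eta\in[\rho,1]$, $\gamma>0$, $\delta>0$, $\beta\ge0$. Algorithm: initial points $x_0=x_1\in\mathbb R^n$, $\lambda_0=\lambda_1\in\mathbb R^m$. For $k=1,2,\dots$: set $\alpha_k=(t_{k+1}-\eta)/\eta$, $c_k=t_{k+1}/\eta$, $\bar x_k=x_k+\frac{t_k-1}{t_{k+1}}(x_k-x_{k-1})$, $\bar\lambda_k=\lambda_k+\frac{t_k-1}{t_{k+1}}(\lambda_k-\lambda_{k-1})$, $p_k=c_k\bar\lambda_k-\alpha_k\lambda_k$, $r_k=\alpha_kAx_k+b$. Case I ($f$ convex and $C^1$): $x_{k+1}=\arg\min_{x}\{f(x)+\frac\beta2\|Ax-b\|^2+\frac1{2\gamma}\|x-\bar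 x_k\|^2+\langle p_k,Ax-b\rangle+\frac\delta2\|c_kAx-r_k\|^2\}$. Case II ($f$ convex with $L$-Lipschitz gradient, and $\gamma\le 1/L$): $x_{k+1}=\arg\min_{x}\{\langle\nabla f(\bar x_k),x\rangle+\frac\beta2\|Ax-b\|^2+\frac1{2\gamma}\|x-\bar x_k\|^2+\langle p_k,Ax-b\rangle+\frac\delta2\|c_kAx-r_k\|^2\}$. Then $\lambda_{k+1}=\bar\lambda_k+\delta(c_kAx_{k+1}-r_k)$. *)

(* Defs.v *)
From HB Require Import structures.
From mathcomp Require Import all_boot all_order all_algebra.
From mathcomp Require Import all_classical all_reals all_analysis.
Set Implicit Arguments. Unset Strict Implicit. Unset Printing Implicit Defensive.
Import Order.TTheory GRing.Theory Num.Theory.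
Import numFieldNormedType.Exports.
Local Open Scope ring_scope.

Section Defs.
Variable R : realType.

Definition dot (n : nat) (u v : 'cV[R]_n) : R := \sum_(i < n) u i 0 * v i 0.
Definition enorm (n : nat) (u : 'cV[R]_n) : R := Num.sqrt (dot u u).

Definition convex_fn (n : nat) (f : 'cV[R]_n -> R) : Prop :=
  forall (x y : 'cV[R]_n) (th : R), 0 <= th <= 1 ->
    f (th *: x + (1 - th) *: y) <= th * f x + (1 - th) * f y.

Definition is_gradient (n : nat) (f : 'cV[R]_n -> R) (gf : 'cV[R]_n -> 'cV[R]_n) : Prop :=
  forall x : 'cV[R]_n, differentiable f x /\ forall h, 'd f x h = dot (gf x) h.

Definition augLag (m n : nat) (f : 'cV[R]_n -> R) (A : 'M[R]_(m, n)) (b : 'cV[R]_m)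
    (beta : R) (x : 'cV[R]_n) (lam : 'cV[R]_m) : R :=
  f x + dot lam (A *m x - b) + beta / 2 * enorm (A *m x - b) ^+ 2.

(* ||(x, lam)||_M with M = diag(gamma^-1 I_n, delta^-1 I_m) *)
Definition Mnorm (m n : nat) (gamma delta : R) (x : 'cV[R]_n) (lam : 'cV[R]_m) : R :=
  Num.sqrt (enorm x ^+ 2 / gamma + enorm lam ^+ 2 / delta).

Definition alpha_k (t : nat -> R) (eta : R) (k : nat) : R := (t k.+1 - eta) / eta.
Definition c_k (t : nat -> R) (eta : R) (k : nat) : R := t k.+1 / eta.
Definition extrap (p : nat) (t : nat -> R) (z : nat -> 'cV[R]_p) (k : nat) : 'cV[R]_p :=
  z k + ((t k - 1) / t k.+1) *: (z k - z k.-1).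
Definition p_k (m : nat) (t : nat -> R) (eta : R) (lam : nat -> 'cV[R]_m) (k : nat) :=
  c_k t eta k *: extrap t lam k - alpha_k t eta k *: lam k.
Definition r_k (m n : nat) (A : 'M[R]_(m, n)) (b : 'cV[R]_m) (t : nat -> R) (eta : R)
    (x : nat -> 'cV[R]_n) (k : nat) : 'cV[R]_m :=
  alpha_k t eta k *: (A *m x k) + b.

Definition sub_common (m n : nat) (A : 'M[R]_(m, n)) (b : 'cV[R]_m)
    (t : nat -> R) (eta gamma delta beta : R)
    (x : nat -> 'cV[R]_n) (lam : nat -> 'cV[R]_m) (k : nat) (y : 'cV[R]_n) : R :=
  beta / 2 * enorm (A *m y - b) ^+ 2
  + 1 / (2 * gamma) * enorm (y - extrap t x k) ^+ 2
  + dot (p_k t eta lam k) (A *m y - b)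
  + delta / 2 * enorm (c_k t eta k *: (A *m y) - r_k A b t eta x k) ^+ 2.

Definition objI (m n : nat) (f : 'cV[R]_n -> R) (A : 'M[R]_(m, n)) (b : 'cV[R]_m)
    (t : nat -> R) (eta gamma delta beta : R)
    (x : nat -> 'cV[R]_n) (lam : nat -> 'cV[R]_m) (k : nat) (y : 'cV[R]_n) : R :=
  f y + sub_common A b t eta gamma delta beta x lam k y.

Definition objII (m n : nat) (gf : 'cV[R]_n -> 'cV[R]_n) (A : 'M[R]_(m, n)) (b : 'cV[R]_m)
    (t : nat -> R) (eta gamma delta beta : R)
    (x : nat -> 'cV[R]_n) (lam : nat -> 'cV[R]_m) (k : nat) (y : 'cV[R]_n) : R :=
  dot (gf (extrap t x k)) y + sub_common A b t eta gamma delta beta x lam k y.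

End Defs.

(* Main.v *)
Require Import Defs.
From HB Require Import structures.
From mathcomp Require Import all_boot all_order all_algebra.
From mathcomp Require Import all_classical all_reals all_analysis.
From mathcomp Require Import ring lra.
Import Order.TTheory GRing.Theory Num.Theory.
Import numFieldNormedType.Exports.
Set Implicit Arguments. Unset Strict Implicit. Unset Printing Implicit Defensive.
Local Open Scope classical_set_scope.
Local Open Scope ring_scope.


Section DotLemmas.
Variable R : realType.

Lemma dotC n (u v : 'cV[R]_n) : dot u v = dot v u.
Proof. by rewrite /dot; apply: eq_bigr => i _; rewrite mulrC. Qed.
Lemma dotDl n (u v w : 'cV[R]_n) : dot (u + v) w = dot u w + dot v w.
Proof. by rewrite /dot -big_split; apply: eq_bigr => i _; rewrite !mxE mulrDl. Qed.
Lemma dotNl n (u w : 'cV[R]_n) : dot (- u) w = - dot u w.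
Proof. by rewrite /dot -sumrN; apply: eq_bigr => i _; rewrite !mxE mulNr. Qed.
Lemma dotZl n (a : R) (u w : 'cV[R]_n) : dot (a *: u) w = a * dot u w.
Proof. by rewrite /dot mulr_sumr; apply: eq_bigr => i _; rewrite !mxE mulrA. Qed.
Lemma dotDr n (u v w : 'cV[R]_n) : dot w (u + v) = dot w u + dot w v.
Proof. by rewrite dotC dotDl !(dotC w). Qed.
Lemma dotNr n (u w : 'cV[R]_n) : dot w (- u) = - dot w u.
Proof. by rewrite dotC dotNl dotC. Qed.
Lemma dotZr n (a : R) (u w : 'cV[R]_n) : dot w (a *: u) = a * dot w u.
Proof. by rewrite dotC dotZl dotC. Qed.
Lemma dot_ge0 n (u : 'cV[R]_n) : 0 <= dot u u.
Proof. by apply: sumr_ge0 => i _; rewrite -expr2 sqr_ge0. Qed.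
Lemma dot_mulmx m n (A : 'M[R]_(m, n)) u v : dot u (A *m v) = dot (A^T *m u) v.
Proof.
rewrite /dot.
under eq_bigr => i _ do rewrite mxE big_distrr /=.
rewrite exchange_big /=; apply: eq_bigr => j _.
rewrite mxE big_distrl /=; apply: eq_bigr => i _.
by rewrite mxE mulrCA mulrA.
Qed.
Lemma enorm_sq n (u : 'cV[R]_n) : enorm u ^+ 2 = dot u u.
Proof. by rewrite /enorm sqr_sqrtr // dot_ge0. Qed.
Lemma enorm_ge0 n (u : 'cV[R]_n) : 0 <= enorm u.
Proof. exact: sqrtr_ge0. Qed.
Lemma dot0_vec n (u v : 'cV[R]_n) : dot u u = 0 -> dot u v = 0.
Proof.
move=> H; rewrite /dot big1 // => i _.
have Hi : u i 0 * u i 0 = 0.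
  by apply: (psumr_eq0P _ H) => // j _; rewrite -expr2 sqr_ge0.
move: Hi => /eqP; rewrite mulf_eq0 orbb => /eqP ->; by rewrite mul0r.
Qed.
Lemma CS n (u v : 'cV[R]_n) : dot u v <= enorm u * enorm v.
Proof.
have [a0|apos] := eqVneq (enorm u) 0.
  have : dot u u = 0 by rewrite -enorm_sq a0 expr0n.
  by move/dot0_vec => ->; rewrite a0 mul0r.
have [c0|cpos] := eqVneq (enorm v) 0.
  have : dot v v = 0 by rewrite -enorm_sq c0 expr0n.
  by move/(@dot0_vec _ v u); rewrite dotC => ->; rewrite c0 mulr0.
have ha : 0 < enorm u by rewrite lt0r apos enorm_ge0.
have hc : 0 < enorm v by rewrite lt0r cpos enorm_ge0.
have := dot_ge0 (enorm v *: u - enorm u *: v).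
rewrite !(dotDl, dotDr, dotNl, dotNr, dotZl, dotZr) ?(dotC v u) -!enorm_sq.
set a := enorm u; set c := enorm v; set d := dot u v => H.
have H2 : 0 <= 2 * a * c * (a * c - d) by nra.
have : 0 <= a * c - d.
  by rewrite -(pmulr_rge0 _ (_ : 0 < 2 * a * c)) //; rewrite !mulr_gt0.
lra.
Qed.
End DotLemmas.

Ltac normdot := repeat match goal with |- context [dot ?u ?v] =>
   match goal with |- context [dot v u] => progress rewrite (dotC v u) end end.
Ltac dexp := repeat progress (rewrite ?(mulmxDr, mulmxN) -?scalemxAr
   ?(dotDl, dotDr, dotNl, dotNr, dotZl, dotZr)).

Ltac expr u v :=
  lazymatch v with
  | ?v1 + ?v2 => let e1 := expr u v1 in let e2 := expr u v2 in constr:(e1 + e2)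
  | - ?v1 => let e1 := expr u v1 in constr:(- e1)
  | ?a *: ?v1 => let e1 := expr u v1 in constr:(a * e1)
  | _ => constr:(dot u v)
  end.
Ltac expl u v :=
  lazymatch u with
  | ?u1 + ?u2 => let e1 := expl u1 v in let e2 := expl u2 v in constr:(e1 + e2)
  | - ?u1 => let e1 := expl u1 v in constr:(- e1)
  | ?a *: ?u1 => let e1 := expl u1 v in constr:(a * e1)
  | _ => expr u v
  end.
Ltac dexp2 := repeat match goal with
  | |- context [dot ?u ?v] =>
     let E := expl u v in
     lazymatch E with
     | dot u v => fail
     | _ => rewrite (_ : dot u v = E); [| by dexp]
     end
  end.


Section Sub.
Variables (R : realType) (m n : nat) (A : 'M[R]_(m, n)) (b : 'cV[R]_m)
  (t : nat -> R) (eta gamma delta beta : R)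
  (x : nat -> 'cV[R]_n) (lam : nat -> 'cV[R]_m).

Definition Gd k (y0 h : 'cV[R]_n) : R :=
  beta * dot (A *m y0 - b) (A *m h) + 1 / gamma * dot (y0 - extrap t x k) h
  + dot (p_k t eta lam k) (A *m h)
  + delta * c_k t eta k * dot (c_k t eta k *: (A *m y0) - r_k A b t eta x k) (A *m h).
Definition Qd k (h : 'cV[R]_n) : R :=
  beta / 2 * dot (A *m h) (A *m h) + 1 / (2 * gamma) * dot h h
  + delta / 2 * c_k t eta k ^+ 2 * dot (A *m h) (A *m h).

Lemma sub_expand k y0 h th : gamma != 0 ->
  sub_common A b t eta gamma delta beta x lam k (y0 + th *: h) =
  sub_common A b t eta gamma delta beta x lam k y0 + th * Gd k y0 h + th ^+ 2 * Qd k h.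
Proof.
move=> g0.
rewrite /sub_common /Gd /Qd !enorm_sq.
move: (extrap t x k) (p_k t eta lam k) (r_k A b t eta x k) (c_k t eta k) => e pk rk c.
dexp. normdot. by field.
Qed.
End Sub.


Section Calc.
Variables (R : realType) (n : nat) (f : 'cV[R]_n -> R) (gf : 'cV[R]_n -> 'cV[R]_n).

Lemma enormZ (a : R) (u : 'cV[R]_n) : enorm (a *: u) = `|a| * enorm u.
Proof.
by rewrite /enorm dotZl dotZr mulrA -expr2 sqrtrM ?sqr_ge0 // sqrtr_sqr.
Qed.

Lemma line_derive (x h : 'cV[R]_n) (th0 : R) : is_gradient f gf ->
  is_derive th0 (1 : R) (fun th : R => f (x + th *: h)) (dot (gf (x + th0 *: h)) h).
Proof.
move=> Hg; have [dif dfe] := Hg (x + th0 *: h).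
have der : derivable f (x + th0 *: h) h := diff_derivable dif.
have E : (fun s : R => s^-1 *: (((fun th : R => f (x + th *: h)) \o shift th0) (s *: 1)
            - f (x + th0 *: h)))
    = (fun s : R => s^-1 *: ((f \o shift (x + th0 *: h)) (s *: h) - f (x + th0 *: h))).
  apply: funext => s /=; congr (_ *: (f _ - _)).
  rewrite -[s *: 1]/(s * 1) mulr1 scalerDl addrCA addrC; congr (_ + _).
apply: DeriveDef.
  by rewrite /derivable E.
by rewrite /derive E -[lim _]/('D_h f (x + th0 *: h)) deriveE // dfe.
Qed.


Lemma descent (L : R) (x y : 'cV[R]_n) : is_gradient f gf -> 0 <= L ->
  (forall u v, enorm (gf u - gf v) <= L * enorm (u - v)) ->
  f y <= f x + dot (gf x) (y - x) + L / 2 * dot (y - x) (y - x).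
Proof.
move=> Hg L0 Hl.
set h := y - x; set d0 := dot (gf x) h; set H := dot h h; set c := L / 2 * H.
pose g := fun th : R => f (x + th *: h).
pose psi := g - (cst d0 * id + cst c * (id * id)).
pose dpsi := fun th : R => dot (gf (x + th *: h)) h - (d0 + c * (th + th)).
have Dpsi : forall th, is_derive th (1 : R) psi (dpsi th).
  move=> th; rewrite /psi /dpsi.
  apply: is_derive_eq.
    by apply: is_deriveB; first exact: line_derive.
  congr (_ - _); rewrite /cst /=.
  have sc : forall a b : R, a *: b = a * b by [].
  rewrite !sc.
  ring.
have cont : {within `[0, 1], continuous psi}.
  apply: derivable_within_continuous => th _.
  by case: (Dpsi th).
have [c0 hc0 Hmvt] := MVT_segment (@ler01 R) (fun th _ => Dpsi th) cont.
have le0 : dpsi c0 <= 0.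
  move: hc0; rewrite in_itv /= => /andP [c0ge c0le].
  rewrite /dpsi.
  have : dot (gf (x + c0 *: h) - gf x) h <= L * c0 * H.
    apply: le_trans (CS _ _) _.
    have := Hl (x + c0 *: h) x; rewrite addrAC subrr add0r enormZ ger0_norm //.
    move=> Hle; rewrite /H -enorm_sq expr2 mulrA.
    by apply: ler_wpM2r; [exact: enorm_ge0 | rewrite -mulrA].
  rewrite dotDl dotNl -/d0 /c. nra.
move: Hmvt; rewrite subr0 mulr1 => Hm.
have : psi 1 - psi 0 <= 0 by rewrite Hm.
rewrite /psi /g !fctE /= scale0r addr0 scale1r.
have -> : x + h = y by rewrite /h addrC subrK.
rewrite -/h /c /H. lra.
Qed.


Lemma grad_ineq (x y : 'cV[R]_n) : convex_fn f -> is_gradient f gf ->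
  f x + dot (gf x) (y - x) <= f y.
Proof.
move=> Hc Hg; have [dif dfe] := Hg x; set h := y - x.
have der : derivable f x h := diff_derivable dif.
have cv : (fun s : R => s^-1 *: ((f \o shift x) (s *: h) - f x)) @ 0^' --> 'D_h f x := der.
have incl : (0:R)^'+ `=>` (0:R)^'.
  by apply: within_subset => u /= hu; rewrite gt_eqF.
have cvr := cvg_trans (cvg_app _ incl) cv.
have : 'D_h f x <= f y - f x.
  apply: (closed_cvg _ (@closed_le R (f y - f x)) _ _ cvr).
  near=> s.
  have s0 : 0 < s by near: s; exact: nbhs_right_gt.
  have s1 : s < 1 by near: s; apply: nbhs_right_lt; exact: ltr01.
  have E : s *: h + x = s *: y + (1 - s) *: x.
    by rewrite /h; apply/matrixP => i j; rewrite !mxE; ring.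
  have := Hc y x s; rewrite (ltW s0) (ltW s1) /= -E => /(_ isT) Hcv.
  rewrite /= -[_ *: (_ : R)]/(_ * _) mulrC ler_pdivrMr //.
  lra.
rewrite deriveE // dfe. lra.
Unshelve. all: end_near.
Qed.

End Calc.


Lemma small_lemma (R : realType) (V Q : R) : 0 <= Q ->
  (forall th, 0 < th -> th <= 1 -> 0 <= V + th * Q) -> 0 <= V.
Proof.
move=> Q0 H; rewrite leNgt; apply/negP => V0.
have hpos : 0 < Q - V by lra.
have th0 : 0 < - V / (Q - V) by rewrite divr_gt0 // oppr_gt0.
have th1 : - V / (Q - V) <= 1 by rewrite ler_pdivrMr // mul1r; lra.
have := H _ th0 th1.
have -> : V + - V / (Q - V) * Q = - (V * V) / (Q - V).
  by field; rewrite gt_eqF.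
rewrite pmulr_lge0 ?invr_gt0 // oppr_ge0 => HV.
have : 0 < V * V by nra.
lra.
Qed.

Section Keys.
Variables (R : realType) (m n : nat) (f : 'cV[R]_n -> R) (gf : 'cV[R]_n -> 'cV[R]_n)
  (A : 'M[R]_(m, n)) (b : 'cV[R]_m)
  (t : nat -> R) (eta gamma delta beta : R)
  (x : nat -> 'cV[R]_n) (lam : nat -> 'cV[R]_m).

Lemma Qd_ge0 k h : 0 < gamma -> 0 <= delta -> 0 <= beta ->
  0 <= Qd A t eta gamma delta beta k h.
Proof.
move=> g0 d0 b0; rewrite /Qd.
apply: addr_ge0; [apply: addr_ge0|]; apply: mulr_ge0; rewrite ?dot_ge0 //.
- by apply: divr_ge0.
- by rewrite div1r invr_ge0 mulr_ge0 // ltW.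
- by apply: mulr_ge0; [apply: divr_ge0| rewrite sqr_ge0].
Qed.

Lemma keyI k : convex_fn f -> 0 < gamma -> 0 <= delta -> 0 <= beta ->
  (forall y, objI f A b t eta gamma delta beta x lam k (x k.+1)
             <= objI f A b t eta gamma delta beta x lam k y) ->
  forall y, f (x k.+1) <= f y + Gd A b t eta gamma delta beta x lam k (x k.+1) (y - x k.+1)
     + 1 / (2 * gamma) * dot (x k.+1 - extrap t x k) (x k.+1 - extrap t x k).
Proof.
move=> Hc g0 d0 b0 Hmin y.
set x1 := x k.+1; set h := y - x1.
have S0 : 0 <= 1 / (2 * gamma) * dot (x1 - extrap t x k) (x1 - extrap t x k).
  by apply: mulr_ge0; rewrite ?dot_ge0 // div1r invr_ge0 mulr_ge0 // ltW.
suff : 0 <= f y - f x1 + Gd A b t eta gamma delta beta x lam k x1 h by lra.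
apply: (small_lemma (Qd_ge0 k h g0 d0 b0)) => th th0 th1.
have := Hmin (x1 + th *: h).
rewrite /objI !sub_expand ?gt_eqF //.
have Hcv : f (th *: y + (1 - th) *: x1) <= th * f y + (1 - th) * f x1.
  by apply: Hc; rewrite (ltW th0) th1.
have E : th *: y + (1 - th) *: x1 = x1 + th *: h.
  by rewrite /h; apply/matrixP => i j; rewrite !mxE; ring.
rewrite E in Hcv => Hm.
have : 0 <= th * (f y - f x1 + Gd A b t eta gamma delta beta x lam k x1 h
                  + th * Qd A t eta gamma delta beta k h) by nra.
by rewrite pmulr_rge0.
Qed.

Lemma keyII k (L : R) : convex_fn f -> is_gradient f gf -> 0 < L ->
  (forall u v, enorm (gf u - gf v) <= L * enorm (u - v)) -> gamma <= 1 / L ->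
  0 < gamma -> 0 <= delta -> 0 <= beta ->
  (forall y, objII gf A b t eta gamma delta beta x lam k (x k.+1)
             <= objII gf A b t eta gamma delta beta x lam k y) ->
  forall y, f (x k.+1) <= f y + Gd A b t eta gamma delta beta x lam k (x k.+1) (y - x k.+1)
     + 1 / (2 * gamma) * dot (x k.+1 - extrap t x k) (x k.+1 - extrap t x k).
Proof.
move=> Hc Hg L0 HL gL g0 d0 b0 Hmin y.
set x1 := x k.+1; set h := y - x1; set xb := extrap t x k.
have V0 : 0 <= dot (gf xb) h + Gd A b t eta gamma delta beta x lam k x1 h.
  apply: (small_lemma (Qd_ge0 k h g0 d0 b0)) => th th0 th1.
  have := Hmin (x1 + th *: h).
  rewrite /objII !sub_expand ?gt_eqF // dotDr dotZr -/xb => Hm.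
  have : 0 <= th * (dot (gf xb) h + Gd A b t eta gamma delta beta x lam k x1 h
                  + th * Qd A t eta gamma delta beta k h) by nra.
  by rewrite pmulr_rge0.
have Hd := descent xb x1 Hg (ltW L0) HL.
have Hgi := grad_ineq xb y Hc Hg.
move: Hd.
have E : dot (gf xb) (x1 - xb) - dot (gf xb) (y - xb) = - dot (gf xb) h.
  by rewrite /h !dotDr !dotNr; ring.
set D := dot (x1 - xb) (x1 - xb).
have D0 : 0 <= D by exact: dot_ge0.
move=> Hd.
have Lg : L * gamma <= 1.
  by have := ler_wpM2l (ltW L0) gL; rewrite div1r mulfV ?gt_eqF.
have : L / 2 * D <= 1 / (2 * gamma) * D.
  rewrite -subr_ge0.
  have -> : 1 / (2 * gamma) * D - L / 2 * D = (1 - L * gamma) * D / (2 * gamma).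
    by field; rewrite gt_eqF.
  by apply: divr_ge0; [apply: mulr_ge0; lra | lra].
lra.
Qed.
End Keys.


Section Core.
Variables (R : realType) (m n : nat) (f : 'cV[R]_n -> R)
  (A : 'M[R]_(m, n)) (b : 'cV[R]_m)
  (t : nat -> R) (rho eta gamma delta beta : R)
  (x : nat -> 'cV[R]_n) (lam : nat -> 'cV[R]_m)
  (xs : 'cV[R]_n) (ls : 'cV[R]_m).

Definition phi (y : 'cV[R]_n) : R :=
  f y - f xs + dot ls (A *m y - b) + beta / 2 * dot (A *m y - b) (A *m y - b).

Definition Ef (s : R) (xp xc : 'cV[R]_n) (lp lc : 'cV[R]_m) : R :=
  s ^+ 2 * phi xc
  + 1 / 2 * (dot (eta *: (xc - xs) + (s - 1) *: (xc - xp))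
                 (eta *: (xc - xs) + (s - 1) *: (xc - xp)) / gamma
             + dot (eta *: (lc - ls) + (s - 1) *: (lc - lp))
                 (eta *: (lc - ls) + (s - 1) *: (lc - lp)) / delta)
  + eta * (1 - eta) / 2 * (dot (xc - xs) (xc - xs) / gamma
                           + dot (lc - ls) (lc - ls) / delta).

Definition En k := Ef (t k) (x k.-1) (x k) (lam k.-1) (lam k).
Definition Dn k := dot (x k - x k.-1) (x k - x k.-1) / gamma
                   + dot (lam k - lam k.-1) (lam k - lam k.-1) / delta.

Definition Gk k h := Gd A b t eta gamma delta beta x lam k (x k.+1) h.
Definition Keyslack k y := f y + Gk k (y - x k.+1)
   + 1 / (2 * gamma) * dot (x k.+1 - extrap t x k) (x k.+1 - extrap t x k) - f (x k.+1).

Lemma core_id k : t k.+1 != 0 -> eta != 0 -> gamma != 0 -> delta != 0 ->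
  A *m xs = b ->
  lam k.+1 = extrap t lam k + delta *: (c_k t eta k *: (A *m x k.+1) - r_k A b t eta x k) ->
  En k - (En k.+1 + (eta - rho) * t k.+1 * phi (x k) + (1 - eta) / 2 * t k.+1 * Dn k.+1)
  = (t k ^+ 2 - t k.+1 ^+ 2 + rho * t k.+1) * phi (x k)
    + (1 - eta) / 2 * (t k.+1 - 1) * Dn k.+1
    + t k.+1 ^+ 2 / (2 * delta) * dot (lam k.+1 - extrap t lam k) (lam k.+1 - extrap t lam k)
    + t k.+1 ^+ 2 * beta / 2 * (eta / t k.+1 * (1 - eta / t k.+1) * dot (A *m x k - b) (A *m x k - b)
        + (eta / t k.+1) ^+ 2 * dot (c_k t eta k *: (A *m x k.+1) - r_k A b t eta x k)
                                    (c_k t eta k *: (A *m x k.+1) - r_k A b t eta x k))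
    + t k.+1 ^+ 2 * (1 - eta / t k.+1) * Keyslack k (x k)
    + eta * t k.+1 * Keyslack k xs.
Proof.
move=> t1n0 e0 g0 d0 Axs Hl.
rewrite /En /Dn /Ef /Keyslack /Gk /Gd /phi /= Hl /p_k /r_k /extrap /c_k /alpha_k.
rewrite ?mulmxDr ?mulmxN -?scalemxAr Axs.
move: (t k) (t k.+1) t1n0 => s tau t1n0.
move: (x k.-1) (x k) (x k.+1) (lam k.-1) (lam k) (A *m x k) (A *m x k.+1) => xm x0 x1 lm l0 a0 a1.
repeat progress rewrite ?dotDl ?dotDr ?dotNl ?dotNr ?dotZl ?dotZr.
rewrite ?(dotC x0 xm) ?(dotC x1 xm) ?(dotC xs xm) ?(dotC x1 x0) ?(dotC xs x0) ?(dotC xs x1).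
rewrite ?(dotC l0 lm) ?(dotC ls lm) ?(dotC b lm) ?(dotC a0 lm) ?(dotC a1 lm)
  ?(dotC ls l0) ?(dotC b l0) ?(dotC a0 l0) ?(dotC a1 l0)
  ?(dotC b ls) ?(dotC a0 ls) ?(dotC a1 ls) ?(dotC a0 b) ?(dotC a1 b) ?(dotC a1 a0).

field; by rewrite t1n0 e0 g0 d0.
Qed.

Lemma Dn_ge0 k : 0 < gamma -> 0 < delta -> 0 <= Dn k.
Proof.
by move=> g0 d0; rewrite /Dn addr_ge0 // divr_ge0 ?dot_ge0 // ltW.
Qed.

Lemma core_step k : 1 <= t k -> t k <= t k.+1 ->
  t k.+1 ^+ 2 - t k ^+ 2 <= rho * t k.+1 -> rho <= eta -> eta <= 1 ->
  0 < rho -> 0 < gamma -> 0 < delta -> 0 <= beta ->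
  A *m xs = b -> 0 <= phi (x k) ->
  lam k.+1 = extrap t lam k + delta *: (c_k t eta k *: (A *m x k.+1) - r_k A b t eta x k) ->
  0 <= Keyslack k (x k) -> 0 <= Keyslack k xs ->
  En k.+1 + (eta - rho) * t k.+1 * phi (x k) + (1 - eta) / 2 * t k.+1 * Dn k.+1 <= En k.
Proof.
move=> t1 t12 trho re e1 r0 g0 d0 b0 Axs ph0 Hl K1 K2.
have tau0 : 0 < t k.+1 by lra.
rewrite -subr_ge0 core_id ?gt_eqF //; last lra.
have th0 : 0 <= eta / t k.+1 by apply: divr_ge0; lra.
have th1 : eta / t k.+1 <= 1 by rewrite ler_pdivrMr // mul1r; lra.
repeat apply: addr_ge0.
- by apply: mulr_ge0 => //; lra.
- by apply: mulr_ge0; [apply: mulr_ge0; lra| exact: Dn_ge0].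
- by apply: mulr_ge0; [apply: divr_ge0; [exact: sqr_ge0| lra] | exact: dot_ge0].
- apply: mulr_ge0; first by apply: divr_ge0; [apply: mulr_ge0 => //; exact: sqr_ge0| lra].
  apply: addr_ge0; apply: mulr_ge0; rewrite ?dot_ge0 ?sqr_ge0 //.
  by apply: mulr_ge0 => //; lra.
- by apply: mulr_ge0 => //; apply: mulr_ge0; [exact: sqr_ge0| lra].
- by apply: mulr_ge0 => //; apply: mulr_ge0; lra.
Qed.
End Core.


Section VecAux.
Variable R : realType.
Lemma dot0r n (u : 'cV[R]_n) : dot u 0 = 0.
Proof. by rewrite /dot big1 // => i _; rewrite mxE mulr0. Qed.
Lemma dot_sub_bound n (u w : 'cV[R]_n) : dot u u <= 2 * dot (u - w) (u - w) + 2 * dot w w.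
Proof. have := dot_ge0 (u - 2 *: w); dexp; normdot; lra. Qed.
Lemma dot_add_bound n (u w : 'cV[R]_n) : dot (u + w) (u + w) <= 2 * dot u u + 2 * dot w w.
Proof. have := dot_ge0 (u - w); dexp; normdot; lra. Qed.
Lemma sqconv n (th : R) (u w : 'cV[R]_n) : 0 <= th -> th <= 1 ->
  dot (th *: u + (1 - th) *: w) (th *: u + (1 - th) *: w) <= th * dot u u + (1 - th) * dot w w.
Proof.
move=> h0 h1.
have : 0 <= th * (1 - th) * dot (u - w) (u - w).
  by apply: mulr_ge0; [nra| exact: dot_ge0].
dexp; normdot; lra.
Qed.
Lemma enorm_le1 n (u : 'cV[R]_n) : enorm u <= 1 + dot u u.
Proof. rewrite -enorm_sq; have := enorm_ge0 u; nra. Qed.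
End VecAux.

Section Main.
Variables (R : realType) (m n : nat) (f : 'cV[R]_n -> R) (gf : 'cV[R]_n -> 'cV[R]_n)
  (A : 'M[R]_(m, n)) (b : 'cV[R]_m) (t : nat -> R) (rho eta gamma delta beta : R)
  (x : nat -> 'cV[R]_n) (lam : nat -> 'cV[R]_m) (xs : 'cV[R]_n) (ls : 'cV[R]_m).
Hypotheses (Hconv : convex_fn f) (Hgrad : is_gradient f gf)
  (tmono : forall k, (1 <= k)%N -> t k <= t k.+1) (t1 : t 1%N = 1)
  (trho : forall k, (1 <= k)%N -> t k.+1 ^+ 2 - t k ^+ 2 <= rho * t k.+1)
  (r0 : 0 < rho) (re : rho <= eta) (e1 : eta <= 1) (g0 : 0 < gamma) (d0 : 0 < delta)
  (b0 : 0 <= beta) (x01 : x 0%N = x 1%N) (l01 : lam 0%N = lam 1%N)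
  (Hkey : forall k, (1 <= k)%N -> forall y,
     f (x k.+1) <= f y + Gd A b t eta gamma delta beta x lam k (x k.+1) (y - x k.+1)
     + 1 / (2 * gamma) * dot (x k.+1 - extrap t x k) (x k.+1 - extrap t x k))
  (Hupd : forall k, (1 <= k)%N ->
     lam k.+1 = extrap t lam k + delta *: (c_k t eta k *: (A *m x k.+1) - r_k A b t eta x k))
  (Axs : A *m xs = b) (kkt : gf xs + A^T *m ls = 0).

Ltac pull := have r0' := r0; have re' := re; have e1' := e1; have g0' := g0;
  have d0' := d0; have b0' := b0.

Local Notation ph := (phi f A b beta xs ls).
Local Notation EN := (En f A b t eta gamma delta beta x lam xs ls).
Local Notation DN := (Dn gamma delta x lam).

Lemma tge1 k : (1 <= k)%N -> 1 <= t k.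
Proof.
pull.
elim: k => // k IH; case: k IH => [_ _|k IH _]; first by rewrite t1.
exact: le_trans (IH isT) (tmono _).
Qed.

Lemma eta0 : 0 < eta. Proof. pull; lra. Qed.

Lemma gfxs : gf xs = - (A^T *m ls).
Proof. by apply/eqP; rewrite -addr_eq0 kkt. Qed.

Lemma phi_ge0 y : 0 <= ph y.
Proof.
pull.
have := grad_ineq xs y Hconv Hgrad.
rewrite gfxs dotNl -dot_mulmx mulmxBr Axs => H.
rewrite /phi; have := dot_ge0 (A *m y - b) => D.
have : 0 <= beta / 2 * dot (A *m y - b) (A *m y - b) by apply: mulr_ge0 => //; lra.
lra.
Qed.

Lemma f_lower y : - dot ls (A *m y - b) <= f y - f xs.
Proof.
pull.
have := grad_ineq xs y Hconv Hgrad.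
rewrite gfxs dotNl -dot_mulmx mulmxBr Axs; lra.
Qed.

Lemma Lg_phi y : augLag f A b beta y ls - augLag f A b beta xs ls = ph y.
Proof. rewrite /augLag /phi Axs subrr !enorm_sq !dot0r; ring. Qed.

Lemma step k : (1 <= k)%N ->
  EN k.+1 + (eta - rho) * t k.+1 * ph (x k) + (1 - eta) / 2 * t k.+1 * DN k.+1 <= EN k.
Proof.
pull.
move=> k1; apply: core_step => //.
- exact: tge1.
- exact: tmono.
- exact: trho.
- exact: phi_ge0.
- exact: Hupd.
- by rewrite /Keyslack /Gk subr_ge0; exact: Hkey.
- by rewrite /Keyslack /Gk subr_ge0; exact: Hkey.
Qed.

Definition term k := (eta - rho) * t k.+1 * ph (x k) + (1 - eta) / 2 * t k.+1 * DN k.+1.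

Lemma term_ge0 k : (1 <= k)%N -> 0 <= term k.
Proof.
pull.
move=> k1; have := tge1 (k:=k.+1) isT => tk.
apply: addr_ge0; apply: mulr_ge0.
- apply: mulr_ge0; lra.
- exact: phi_ge0.
- apply: mulr_ge0; lra.
- exact: Dn_ge0.
Qed.

Lemma sum_term_ge0 N : 0 <= \sum_(1 <= k < N) term k.
Proof.
pull.
rewrite big_nat_cond; apply: sumr_ge0 => i /andP [/andP [Hi _] _].
exact: term_ge0.
Qed.

Lemma tele N : (1 <= N)%N -> EN N + \sum_(1 <= k < N) term k <= EN 1.
Proof.
pull.
elim: N => // N IH HN; case: N IH HN => [_ _|N IH _].
  by rewrite big_geq // addr0.
rewrite big_nat_recr //=; have := step (k:=N.+1) isT; have := IH isT.
rewrite /term; lra.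
Qed.

Definition uxv k := eta *: (x k - xs) + (t k - 1) *: (x k - x k.-1).
Definition ulv k := eta *: (lam k - ls) + (t k - 1) *: (lam k - lam k.-1).
Definition Uk k := dot (uxv k) (uxv k) / gamma + dot (ulv k) (ulv k) / delta.
Definition Nk k := dot (x k - xs) (x k - xs) / gamma + dot (lam k - ls) (lam k - ls) / delta.

Lemma ENE k : EN k = t k ^+ 2 * ph (x k) + 1 / 2 * Uk k + eta * (1 - eta) / 2 * Nk k.
Proof. by []. Qed.

Lemma Uk_ge0 k : 0 <= Uk k.
Proof. by rewrite /Uk addr_ge0 // divr_ge0 ?dot_ge0 // ltW. Qed.
Lemma Nk_ge0 k : 0 <= Nk k.
Proof. by rewrite /Nk addr_ge0 // divr_ge0 ?dot_ge0 // ltW. Qed.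

Lemma EN_bounds k : t k ^+ 2 * ph (x k) <= EN k /\ Uk k <= 2 * EN k /\ 0 <= EN k.
Proof.
pull.
rewrite ENE; have := Uk_ge0 k; have := Nk_ge0 k.
have := phi_ge0 (x k) => p0.
have : 0 <= t k ^+ 2 * ph (x k) by apply: mulr_ge0 => //; exact: sqr_ge0.
have : 0 <= eta * (1 - eta) / 2 by apply: divr_ge0; [apply: mulr_ge0|]; lra.
move=> c0 tp N0 U0.
have : 0 <= eta * (1 - eta) / 2 * Nk k by apply: mulr_ge0.
lra.
Qed.

Lemma EN_le k : (1 <= k)%N -> EN k <= EN 1.
Proof. move=> k1; have := tele k1; have := sum_term_ge0 k; lra. Qed.

Definition E1 := EN 1.

Lemma E1_ge0 : 0 <= E1.
Proof. by have [_ [_ ?]] := EN_bounds 1. Qed.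

Lemma En1 : EN 1 = augLag f A b beta (x 1%N) ls - augLag f A b beta xs ls
   + eta / (2 * gamma) * enorm (x 1%N - xs) ^+ 2 + eta / (2 * delta) * enorm (lam 1%N - ls) ^+ 2.
Proof.
pull.
rewrite Lg_phi /En /Ef /= x01 l01 t1 !enorm_sq !subrr !scale0r !addr0 !dotZl !dotZr.
by field; rewrite !gt_eqF.
Qed.


Lemma t_pos k : (1 <= k)%N -> 0 < t k.
Proof. by move=> k1; have := tge1 k1; pull; lra. Qed.

Lemma phi_bound k : (1 <= k)%N -> ph (x k) <= E1 / t k ^+ 2.
Proof.
move=> k1; have [H _] := EN_bounds k; have := EN_le k1.
have tp : 0 < t k ^+ 2 by rewrite exprn_gt0 // t_pos.
rewrite ler_pdivlMr // mulrC /E1; lra.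
Qed.

Lemma U1E : Uk 1 = eta ^+ 2 * Nk 1.
Proof.
pull; rewrite /Uk /Nk /uxv /ulv /= t1 x01 l01 !subrr !scale0r !addr0 !dotZl !dotZr.
by field; rewrite !gt_eqF.
Qed.

Definition B0 := 2 * E1 / eta ^+ 2.

Lemma B0_ge0 : 0 <= B0.
Proof.
pull; rewrite /B0; apply: divr_ge0; last exact: sqr_ge0.
by apply: mulr_ge0 => //; exact: E1_ge0.
Qed.

Lemma N1_bound : Nk 1 <= B0.
Proof.
pull; have [_ [H _]] := EN_bounds 1; rewrite U1E in H.
have ep : 0 < eta ^+ 2 by rewrite exprn_gt0 // eta0.
by rewrite /B0 ler_pdivlMr // mulrC /E1.
Qed.

Lemma idN k : (t k.+1 - 1) * Nk k + Uk k.+1 / eta - (t k.+1 - 1 + eta) * Nk k.+1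
   = (t k.+1 - 1) * (t k.+1 - 1 + eta) * DN k.+1 / eta.
Proof.
pull; rewrite /Nk /Uk /uxv /ulv /Dn /=.
move: (t k.+1) (x k) (x k.+1) (lam k) (lam k.+1) => s x0 x1 l0 l1.
dexp; normdot.
by field; rewrite !gt_eqF // eta0.
Qed.

Lemma Nk_bound k : (1 <= k)%N -> Nk k <= B0.
Proof.
elim: k => // k IH; case: k IH => [_ _|k IH _]; first exact: N1_bound.
pull; have Nk0 := IH isT; have := idN k.+1.
have ts := tge1 (k := k.+2) isT.
have T0 : 0 < t k.+2 - 1 + eta by have := eta0; lra.
have D0 : 0 <= (t k.+2 - 1) * (t k.+2 - 1 + eta) * DN k.+2 / eta.
  apply: divr_ge0; last by lra.
  by apply: mulr_ge0; [apply: mulr_ge0; lra | exact: Dn_ge0].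
have HU : Uk k.+2 / eta <= 2 * E1 / eta.
  have [_ [H _]] := EN_bounds k.+2; have := EN_le (k := k.+2) isT.
  rewrite ler_pM2r ?invr_gt0 ?eta0 // /E1; lra.
have HN : (t k.+2 - 1) * Nk k.+1 <= (t k.+2 - 1) * B0 by apply: ler_wpM2l => //; lra.
have E : 2 * E1 / eta = eta * B0 by rewrite /B0; field; rewrite gt_eqF ?eta0.
move=> Hid.
have : (t k.+2 - 1 + eta) * Nk k.+2 <= (t k.+2 - 1 + eta) * B0 by lra.
by rewrite ler_pM2l.
Qed.

Lemma x_bound k : (1 <= k)%N -> dot (x k - xs) (x k - xs) <= gamma * B0.
Proof.
move=> k1; pull; have := Nk_bound k1; rewrite /Nk.
have : 0 <= dot (lam k - ls) (lam k - ls) / delta by apply: divr_ge0; rewrite ?dot_ge0 // ltW.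
move=> H1 H2.
have : dot (x k - xs) (x k - xs) / gamma <= B0 by lra.
by rewrite ler_pdivrMr // mulrC.
Qed.

Lemma lam_bound k : (1 <= k)%N -> dot (lam k - ls) (lam k - ls) <= delta * B0.
Proof.
move=> k1; pull; have := Nk_bound k1; rewrite /Nk.
have : 0 <= dot (x k - xs) (x k - xs) / gamma by apply: divr_ge0; rewrite ?dot_ge0 // ltW.
move=> H1 H2.
have : dot (lam k - ls) (lam k - ls) / delta <= B0 by lra.
by rewrite ler_pdivrMr // mulrC.
Qed.

Definition Bx := 1 + 2 * (gamma * B0) + 2 * dot xs xs + 2 * (delta * B0) + 2 * dot ls ls.

Lemma bounded k : enorm (x k) <= Bx /\ enorm (lam k) <= Bx.
Proof.
pull.
have [k1 ek ek'] : exists2 k', (1 <= k')%N & (x k = x k' /\ lam k = lam k').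
  by case: k => [|k]; [exists 1%N; rewrite ?x01 ?l01 | exists k.+1].
case: ek' => -> ->.
have := x_bound ek; have := lam_bound ek.
have := dot_sub_bound (x k1) xs; have := dot_sub_bound (lam k1) ls.
have := enorm_le1 (x k1); have := enorm_le1 (lam k1).
have := dot_ge0 xs; have := dot_ge0 ls; have := B0_ge0.
have : 0 <= gamma * B0 by apply: mulr_ge0 => //; [lra | exact: B0_ge0].
have : 0 <= delta * B0 by apply: mulr_ge0 => //; [lra | exact: B0_ge0].
rewrite /Bx; split; lra.
Qed.

Lemma id_inc k : 2 * Uk k + 2 * eta ^+ 2 * Nk k - (t k - 1) ^+ 2 * DN k
  = dot (uxv k + eta *: (x k - xs)) (uxv k + eta *: (x k - xs)) / gamma
    + dot (ulv k + eta *: (lam k - ls)) (ulv k + eta *: (lam k - ls)) / delta.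
Proof.
pull; rewrite /Nk /Uk /uxv /ulv /Dn.
move: (t k) (x k) (x k.-1) (lam k) (lam k.-1) => s x0 xm l0 lm.
dexp; normdot.
by field; rewrite !gt_eqF.
Qed.

Lemma inc_sq k : (1 <= k)%N -> (t k - 1) ^+ 2 * DN k <= 8 * E1.
Proof.
move=> k1; pull; have := id_inc k.
have W0 : 0 <= dot (uxv k + eta *: (x k - xs)) (uxv k + eta *: (x k - xs)) / gamma
    + dot (ulv k + eta *: (lam k - ls)) (ulv k + eta *: (lam k - ls)) / delta.
  by apply: addr_ge0; apply: divr_ge0; rewrite ?dot_ge0 // ltW.
have [_ [HU _]] := EN_bounds k; have := EN_le k1.
have HN := Nk_bound k1.
have HN2 : eta ^+ 2 * Nk k <= eta ^+ 2 * B0 by apply: ler_wpM2l => //; exact: sqr_ge0.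
have E : eta ^+ 2 * B0 = 2 * E1 by rewrite /B0; field; rewrite gt_eqF ?eta0.
rewrite /E1 in E *; lra.
Qed.

Lemma Mnorm_DN k : Mnorm gamma delta (x k - x k.-1) (lam k - lam k.-1) = Num.sqrt (DN k).
Proof. by rewrite /Mnorm !enorm_sq. Qed.

Lemma inc_bound k : (1 < k)%N -> 1 < t k ->
  Mnorm gamma delta (x k - x k.-1) (lam k - lam k.-1) <= 2 * Num.sqrt (2 * E1) / (t k - 1).
Proof.
move=> k1 tk; pull; rewrite Mnorm_DN.
have t0 : 0 < t k - 1 by lra.
have R0 : 0 <= 2 * Num.sqrt (2 * E1) / (t k - 1).
  by apply: divr_ge0; [apply: mulr_ge0 => //; exact: sqrtr_ge0 | lra].
rewrite -(ger0_norm R0) -sqrtr_sqr ler_sqrt; last exact: sqr_ge0.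
rewrite expr_div_n exprMn sqr_sqrtr; last by apply: mulr_ge0 => //; exact: E1_ge0.
rewrite ler_pdivlMr; last by rewrite exprn_gt0.
have := inc_sq (ltnW k1); lra.
Qed.

Definition Psi k := ulv k + (1 - eta) *: lam k.
Definition rr k := A *m x k - b.
Definition Uv k := t k ^+ 2 *: rr k - (eta / delta) *: Psi k.
Definition th k := (t k.+1 ^+ 2 - eta * t k.+1) / t k ^+ 2.

Lemma Uv_rec k : (1 <= k)%N ->
  Uv k.+1 = th k *: Uv k + (1 - th k) *: (- (eta / delta) *: Psi k).
Proof.
move=> k1; pull; have tk := t_pos k1; have tk1 := t_pos (k := k.+1) isT.
rewrite /Uv /Psi /ulv /rr /th Hupd //= /extrap /c_k /r_k /alpha_k.
apply/matrixP => i j; rewrite !mxE.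
by field; rewrite !gt_eqF ?eta0.
Qed.

Lemma th_bounds k : (1 <= k)%N -> 0 <= th k /\ th k <= 1.
Proof.
move=> k1; pull; have tk := t_pos k1; have tk1 := tge1 (k := k.+1) isT.
have tt : 0 < t k ^+ 2 by rewrite exprn_gt0.
have := trho k1 => Hr.
have : rho * t k.+1 <= eta * t k.+1 by apply: ler_wpM2r; lra.
split.
  by apply: divr_ge0; [nra | exact: ltW].
by rewrite ler_pdivrMr // mul1r; lra.
Qed.

Definition PsiB := 2 * (delta * (2 * E1)) + 2 * ((1 - eta) ^+ 2 * (2 * (delta * B0) + 2 * dot ls ls)).

Lemma Psi_bound k : (1 <= k)%N -> dot (Psi k) (Psi k) <= PsiB.
Proof.
move=> k1; pull.
have H1 := dot_add_bound (ulv k) ((1 - eta) *: lam k).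
rewrite dotZl dotZr in H1.
have HU : dot (ulv k) (ulv k) <= delta * (2 * E1).
  have [_ [HU _]] := EN_bounds k; have := EN_le k1; rewrite /Uk in HU.
  have : 0 <= dot (uxv k) (uxv k) / gamma by apply: divr_ge0; rewrite ?dot_ge0 // ltW.
  move=> H0 H2.
  have : dot (ulv k) (ulv k) / delta <= 2 * E1 by rewrite /E1; lra.
  by rewrite ler_pdivrMr // mulrC.
have HL : dot (lam k) (lam k) <= 2 * (delta * B0) + 2 * dot ls ls.
  have := dot_sub_bound (lam k) ls; have := lam_bound k1; lra.
have HL2 : (1 - eta) ^+ 2 * dot (lam k) (lam k) <=
    (1 - eta) ^+ 2 * (2 * (delta * B0) + 2 * dot ls ls).
  by apply: ler_wpM2l => //; exact: sqr_ge0.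
rewrite /PsiB /Psi; lra.
Qed.

Lemma PsiB_ge0 : 0 <= PsiB.
Proof.
pull; rewrite /PsiB; have := E1_ge0; have := B0_ge0; have := dot_ge0 ls.
have : 0 <= (1 - eta) ^+ 2 by exact: sqr_ge0.
move=> h1 h2 h3 h4.
have : 0 <= delta * B0 by apply: mulr_ge0; lra.
have : 0 <= delta * (2 * E1) by apply: mulr_ge0; lra.
move=> h5 h6.
have : 0 <= (1 - eta) ^+ 2 * (2 * (delta * B0) + 2 * dot ls ls) by apply: mulr_ge0 => //; lra.
lra.
Qed.

Definition KU := dot (Uv 1) (Uv 1) + (eta / delta) ^+ 2 * PsiB.

Lemma Uv_bound k : (1 <= k)%N -> dot (Uv k) (Uv k) <= KU.
Proof.
pull.
have P0 : 0 <= (eta / delta) ^+ 2 * PsiB by apply: mulr_ge0; [exact: sqr_ge0 | exact: PsiB_ge0].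
elim: k => // k IH; case: k IH => [_ _|k IH _]; first by rewrite /KU; lra.
have [h0 h1] := th_bounds (k := k.+1) isT.
rewrite Uv_rec //; apply: le_trans (sqconv _ _ h0 h1) _.
rewrite dotZl dotZr.
have HP : (eta / delta) ^+ 2 * dot (Psi k.+1) (Psi k.+1) <= (eta / delta) ^+ 2 * PsiB.
  by apply: ler_wpM2l; [exact: sqr_ge0 | exact: Psi_bound].
have HK : (eta / delta) ^+ 2 * PsiB <= KU by rewrite /KU; have := dot_ge0 (Uv 1); lra.
have := IH isT => HI.
have : th k.+1 * dot (Uv k.+1) (Uv k.+1) <= th k.+1 * KU by apply: ler_wpM2l.
have : (1 - th k.+1) * ((eta / delta) ^+ 2 * dot (Psi k.+1) (Psi k.+1)) <= (1 - th k.+1) * KU.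
  by apply: ler_wpM2l; lra.
lra.
Qed.

Definition Kp := 2 * KU + 2 * ((eta / delta) ^+ 2 * PsiB).

Lemma rr_sq k : (1 <= k)%N -> (t k ^+ 2 * enorm (rr k)) ^+ 2 <= Kp.
Proof.
move=> k1; pull.
have E : t k ^+ 2 *: rr k = Uv k + (eta / delta) *: Psi k by rewrite /Uv subrK.
have := dot_add_bound (Uv k) ((eta / delta) *: Psi k).
rewrite -E !dotZl !dotZr => H.
rewrite exprMn enorm_sq.
have HP : (eta / delta) ^+ 2 * dot (Psi k) (Psi k) <= (eta / delta) ^+ 2 * PsiB.
  by apply: ler_wpM2l; [exact: sqr_ge0 | exact: Psi_bound].
have := Uv_bound k1.
rewrite /Kp; lra.
Qed.

Definition Cc := Num.sqrt Kp + 1.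

Lemma Cc_pos : 0 < Cc.
Proof. by rewrite /Cc ltr_pwDr // sqrtr_ge0. Qed.

Lemma rr_bound k : (1 <= k)%N -> enorm (rr k) <= Cc / t k ^+ 2.
Proof.
move=> k1; pull.
have tp : 0 < t k ^+ 2 by rewrite exprn_gt0 // t_pos.
rewrite ler_pdivlMr // mulrC.
have a0 : 0 <= t k ^+ 2 * enorm (rr k) by apply: mulr_ge0; [exact: ltW | exact: enorm_ge0].
apply: (@le_trans _ _ (Num.sqrt Kp)); last by rewrite /Cc lerDl.
rewrite -(ger0_norm a0) -sqrtr_sqr ler_sqrt; first exact: rr_sq.
have := rr_sq k1; have := sqr_ge0 (t k ^+ 2 * enorm (rr k)); lra.
Qed.

Lemma f_bound k : (1 <= k)%N ->
  `|f (x k) - f xs| <= (E1 + enorm ls * Cc + beta * Cc ^+ 2 / 2) / t k ^+ 2.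
Proof.
move=> k1; pull.
have tp : 0 < t k ^+ 2 by rewrite exprn_gt0 // t_pos.
have Hr := rr_bound k1.
have Hp := phi_bound k1.
have Hl := f_lower (x k).
have c1 := CS ls (rr k).
have c2 := CS (- ls) (rr k).
have en : enorm (- ls) = enorm ls by rewrite /enorm dotNl dotNr opprK.
rewrite en dotNl in c2.
have hl : enorm ls * enorm (rr k) <= enorm ls * (Cc / t k ^+ 2).
  by apply: ler_wpM2l => //; exact: enorm_ge0.
have := dot_ge0 (rr k) => d0r.
have : 0 <= beta / 2 * dot (rr k) (rr k) by apply: mulr_ge0 => //; lra.
have E1p := E1_ge0.
have Cp := Cc_pos.
have : 0 <= beta * Cc ^+ 2 / 2 / t k ^+ 2.
  by apply: divr_ge0; [apply: divr_ge0; [apply: mulr_ge0 => //; exact: sqr_ge0|]|]; lra.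
have : 0 <= enorm ls * Cc / t k ^+ 2.
  by apply: divr_ge0; [apply: mulr_ge0; [exact: enorm_ge0| lra]| lra].
move: hl; rewrite mulrA => hl.
rewrite /phi in Hp; rewrite /rr in c1 c2 hl d0r.
move=> h1 h2 h3; rewrite /rr in h3.
move: (E1) E1p Hp => e E1p Hp.
rewrite ler_norml !mulrDl; apply/andP; split; lra.
Qed.


Lemma sum_bound N : \sum_(1 <= k < N) term k <= E1.
Proof.
pull; case: N => [|N]; first by rewrite big_geq //; exact: E1_ge0.
have := tele (N := N.+1) isT; have [_ [_ h]] := EN_bounds N.+1; rewrite /E1; lra.
Qed.

Lemma main_all :
  (cvg ((fun N : nat => \sum_(1 <= k < N)
           (eta - rho) * t k.+1 * (augLag f A b beta (x k) ls - augLag f A b beta xs ls)) @ \oo)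
   /\ cvg ((fun N : nat => \sum_(1 <= k < N)
           (1 - eta) * t k.+1 * Mnorm gamma delta (x k.+1 - x k) (lam k.+1 - lam k) ^+ 2)
           @ \oo))
  /\ (forall k, (1 <= k)%N -> augLag f A b beta (x k) ls - augLag f A b beta xs ls <=
        (augLag f A b beta (x 1%N) ls - augLag f A b beta xs ls
            + eta / (2 * gamma) * enorm (x 1%N - xs) ^+ 2
            + eta / (2 * delta) * enorm (lam 1%N - ls) ^+ 2) / t k ^+ 2)
  /\ (exists B : R, forall k, enorm (x k) <= B /\ enorm (lam k) <= B)
  /\ (forall k, (1 < k)%N -> 1 < t k ->
        Mnorm gamma delta (x k - x k.-1) (lam k - lam k.-1)
        <= 2 * Num.sqrt (2 * (augLag f A b beta (x 1%N) ls - augLag f A b beta xs ls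
            + eta / (2 * gamma) * enorm (x 1%N - xs) ^+ 2
            + eta / (2 * delta) * enorm (lam 1%N - ls) ^+ 2)) / (t k - 1))
  /\ (exists C : R, 0 < C /\ forall k, (1 <= k)%N ->
        enorm (A *m x k - b) <= C / t k ^+ 2 /\
        `|f (x k) - f xs| <= ((augLag f A b beta (x 1%N) ls - augLag f A b beta xs ls
            + eta / (2 * gamma) * enorm (x 1%N - xs) ^+ 2
            + eta / (2 * delta) * enorm (lam 1%N - ls) ^+ 2) + enorm ls * C + beta * C ^+ 2 / 2)
             / t k ^+ 2).
Proof.
pull; rewrite -En1 -/E1.
have Mn : forall k, Mnorm gamma delta (x k.+1 - x k) (lam k.+1 - lam k) ^+ 2 = DN k.+1.
  by move=> k; rewrite (Mnorm_DN k.+1) /= sqr_sqrtr // Dn_ge0.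
split; [split|split; [|split; [|split]]].
- apply: nondecreasing_is_cvgn.
    apply/nondecreasing_seqP => N; case: N => [|N]; first by rewrite !big_geq.
    rewrite [X in _ <= X]big_nat_recr //= lerDl Lg_phi.
    by apply: mulr_ge0; [apply: mulr_ge0; [lra| have := tge1 (k := N.+2) isT; lra] | exact: phi_ge0].
  exists E1 => _ [N _ <-].
  apply: le_trans (sum_bound N).
  rewrite big_nat_cond [X in _ <= X]big_nat_cond; apply: ler_sum => i /andP [/andP [Hi _] _].
  rewrite Lg_phi /term lerDl; apply: mulr_ge0; last exact: Dn_ge0.
  by apply: mulr_ge0; [lra| have := tge1 (k := i.+1) isT; lra].
- apply: nondecreasing_is_cvgn.
    apply/nondecreasing_seqP => N; case: N => [|N]; first by rewrite !big_geq.
    rewrite [X in _ <= X]big_nat_recr //= lerDl Mn.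
    by apply: mulr_ge0; [apply: mulr_ge0; [lra| have := tge1 (k := N.+2) isT; lra] | exact: Dn_ge0].
  exists (2 * E1) => _ [N _ <-].
  have := sum_bound N => SB.
  apply: (@le_trans _ _ (2 * \sum_(1 <= k < N) term k)); last by lra.
  rewrite mulr_sumr big_nat_cond [X in _ <= X]big_nat_cond; apply: ler_sum => i /andP [/andP [Hi _] _].
  rewrite Mn /term.
  have : 0 <= (eta - rho) * t i.+1 * ph (x i).
    by apply: mulr_ge0; [apply: mulr_ge0; [lra| have := tge1 (k := i.+1) isT; lra] | exact: phi_ge0].
  lra.
- by move=> k k1; rewrite Lg_phi; exact: phi_bound.
- by exists Bx; exact: bounded.
- by move=> k k1 tk; exact: inc_bound.
- exists Cc; split; first exact: Cc_pos.
  by move=> k k1; split; [exact: rr_bound | exact: f_bound].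
Qed.
End Main.


Unset Implicit Arguments.

Theorem theorem4p1 (R : realType) (m n : nat)
  (f : 'cV[R]_n -> R) (gf : 'cV[R]_n -> 'cV[R]_n)
  (A : 'M[R]_(m, n)) (b : 'cV[R]_m)
  (t : nat -> R) (rho eta gamma delta beta : R)
  (x : nat -> 'cV[R]_n) (lam : nat -> 'cV[R]_m)
  (xs : 'cV[R]_n) (ls : 'cV[R]_m) :
  (* f convex and C^1 with gradient gf *)
  convex_fn f -> is_gradient f gf -> continuous gf ->
  (* parameter sequence *)
  (forall k, (1 <= k)%N -> t k <= t k.+1) ->
  t 1%N = 1 ->
  (forall k, (2 < k)%N -> 1 < t k) ->
  t @ \oo --> +oo ->
  0 < rho <= 1 ->
  (forall k, (1 <= k)%N -> t k.+1 ^+ 2 - t k ^+ 2 <= rho * t k.+1) ->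
  rho <= eta <= 1 -> 0 < gamma -> 0 < delta -> 0 <= beta ->
  (* the algorithm *)
  x 0%N = x 1%N -> lam 0%N = lam 1%N ->
  ((forall k, (1 <= k)%N -> forall y,
      objI f A b t eta gamma delta beta x lam k (x k.+1)
      <= objI f A b t eta gamma delta beta x lam k y)
   \/
   (exists L : R, 0 < L /\
      (forall u v, enorm (gf u - gf v) <= L * enorm (u - v)) /\ gamma <= 1 / L /\
      (forall k, (1 <= k)%N -> forall y,
        objII gf A b t eta gamma delta beta x lam k (x k.+1)
        <= objII gf A b t eta gamma delta beta x lam k y))) ->
  (forall k, (1 <= k)%N ->
     lam k.+1 = extrap t lam k
                + delta *: (c_k t eta k *: (A *m x k.+1) - r_k A b t eta x k)) ->
  (* (xs, ls) in the KKT set *)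
  A *m xs = b -> gf xs + A^T *m ls = 0 ->
  let Lg := augLag f A b beta in
  let E1 := Lg (x 1%N) ls - Lg xs ls
            + eta / (2 * gamma) * enorm (x 1%N - xs) ^+ 2
            + eta / (2 * delta) * enorm (lam 1%N - ls) ^+ 2 in
  (* (i) *)
  (cvg ((fun N : nat => \sum_(1 <= k < N)
           (eta - rho) * t k.+1 * (Lg (x k) ls - Lg xs ls)) @ \oo)
   /\ cvg ((fun N : nat => \sum_(1 <= k < N)
           (1 - eta) * t k.+1 * Mnorm gamma delta (x k.+1 - x k) (lam k.+1 - lam k) ^+ 2)
           @ \oo))
  (* (ii) *)
  /\ (forall k, (1 <= k)%N -> Lg (x k) ls - Lg xs ls <= E1 / t k ^+ 2)
  (* (iii) *)
  /\ (exists B : R, forall k, enorm (x k) <= B /\ enorm (lam k) <= B)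
  /\ (forall k, (1 < k)%N -> 1 < t k ->
        Mnorm gamma delta (x k - x k.-1) (lam k - lam k.-1)
        <= 2 * Num.sqrt (2 * E1) / (t k - 1))
  (* (iv) *)
  /\ (exists C : R, 0 < C /\ forall k, (1 <= k)%N ->
        enorm (A *m x k - b) <= C / t k ^+ 2 /\
        `|f (x k) - f xs| <= (E1 + enorm ls * C + beta * C ^+ 2 / 2) / t k ^+ 2).
Proof.
move=> Hc Hg Hcont tmono t1 tgt1 tinf rhob trho etab g0 d0 b0 x01 l01 Hcase Hupd Axs kkt Lg E1.
case/andP: rhob => r0 r1; case/andP: etab => re e1.
have Hkey : forall k, (1 <= k)%N -> forall y,
     f (x k.+1) <= f y + Gd A b t eta gamma delta beta x lam k (x k.+1) (y - x k.+1)
     + 1 / (2 * gamma) * dot (x k.+1 - extrap t x k) (x k.+1 - extrap t x k).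
  case: Hcase => [HI|[L [L0 [HL [gL HII]]]]] k k1 y.
    exact: (keyI Hc g0 (ltW d0) b0 (HI k k1)).
  exact: (keyII Hc Hg L0 HL gL g0 (ltW d0) b0 (HII k k1)).
exact: (main_all Hc Hg tmono t1 trho r0 re e1 g0 d0 b0 x01 l01 Hkey Hupd Axs kkt).
Qed.
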